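(* Let $$\Sigma_1=\begin{pmatrix}-1&-1&1&1\\1&1&1&1\\1&1&1&1\\1&1&1&1\end{pmatrix},\quad \Sigma_2=\begin{pmatrix}-1&-1&1&1\\1&-1&-1&1\\1&1&1&1\\1&1&1&1\end{pmatrix},\quad \Sigma_3=\begin{pmatrix}-1&-1&1&1\\1&-1&1&1\\1&1&-1&1\\1&1&1&1\end{pmatrix}.$$ Then every $4\times4$ matrix with entries $\pm1$ and vanishing permanent is equivalent to exactly one of $\Sigma_1,\Sigma_1^{t},\Sigma_2,\Sigma_2^{t},\Sigma_3$, and these five matrices (which all have vanishing permanent) are pairwise inequivalent. That is, up to equivalence there are exactly five $4\times4$ $(\pm1)$-matrices with vanishing permanent.
   Context: The permanent of $\Sigma=[\sigma_{ij}]$ is $\sum_{\lambda\in\mathrm{Sym}(4)}\sigma_{1,\lambda(1)}\cdots\sigma_{4,\lambda(4)}$; $\Sigma^t$ is the transpose. Two matrices with entries $\pm1$ are equivalent if one is obtained from the other by a finite succession of the operations: interchanging two rows or two columns; negating a row or a column (transposition is not an allowed operation). *)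

(* Defs.v *)
From HB Require Import structures.
From mathcomp Require Import all_boot all_order all_algebra all_fingroup.
Set Implicit Arguments. Unset Strict Implicit. Unset Printing Implicit Defensive.
Import GRing.Theory.
Local Open Scope ring_scope.

Definition mx4 := 'M[int]_4.

Definition pm_one (A : mx4) : Prop := forall i j, A i j = 1 \/ A i j = -1.

Definition permanent (A : mx4) : int :=
  \sum_(s : 'S_4) \prod_(i < 4) A i (s i).

Definition neg_row (i : 'I_4) (A : mx4) : mx4 :=
  \matrix_(k, l) (if k == i then - A k l else A k l).
Definition neg_col (j : 'I_4) (A : mx4) : mx4 :=
  \matrix_(k, l) (if l == j then - A k l else A k l).

Inductive elem_op : mx4 -> mx4 -> Prop :=
| op_xrow i1 i2 A : elem_op A (xrow i1 i2 A)
| op_xcol j1 j2 A : elem_op A (xcol j1 j2 A)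
| op_negrow i A : elem_op A (neg_row i A)
| op_negcol j A : elem_op A (neg_col j A).

Inductive equiv_pm : mx4 -> mx4 -> Prop :=
| eq_refl A : equiv_pm A A
| eq_step A B C : elem_op A B -> equiv_pm B C -> equiv_pm A C.

Definition mx_of_rows (r : seq (seq int)) : mx4 :=
  \matrix_(i < 4, j < 4) nth 0 (nth [::] r i) j.

Definition Sigma1 : mx4 := mx_of_rows
  [:: [:: -1; -1; 1; 1]; [:: 1; 1; 1; 1]; [:: 1; 1; 1; 1]; [:: 1; 1; 1; 1]].
Definition Sigma2 : mx4 := mx_of_rows
  [:: [:: -1; -1; 1; 1]; [:: 1; -1; -1; 1]; [:: 1; 1; 1; 1]; [:: 1; 1; 1; 1]].
Definition Sigma3 : mx4 := mx_of_rows
  [:: [:: -1; -1; 1; 1]; [:: 1; -1; 1; 1]; [:: 1; 1; -1; 1]; [:: 1; 1; 1; 1]].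

Definition reps (k : 'I_5) : mx4 :=
  match val k with
  | 0 => Sigma1
  | 1 => Sigma1^T
  | 2 => Sigma2
  | 3 => Sigma2^T
  | _ => Sigma3
  end.

(* Main.v *)
Require Import Defs.
From HB Require Import structures.
From mathcomp Require Import all_boot all_order all_algebra all_fingroup.
From mathcomp Require Import zify.
From Stdlib Require Import FunctionalExtensionality.
Set Implicit Arguments. Unset Strict Implicit. Unset Printing Implicit Defensive.
Import GRing.Theory.
Local Open Scope ring_scope.

Lemma eqpm_trans A B C : equiv_pm A B -> equiv_pm B C -> equiv_pm A C.
Proof. by elim=> // X Y Z H _ IH HC; apply: eq_step H (IH HC). Qed.

Lemma neg_rowK i A : neg_row i (neg_row i A) = A.
Proof. by apply/matrixP=> k l; rewrite !mxE; case: eqP; rewrite ?opprK. Qed.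
Lemma neg_colK i A : neg_col i (neg_col i A) = A.
Proof. by apply/matrixP=> k l; rewrite !mxE; case: eqP; rewrite ?opprK. Qed.
Lemma xrowK' i1 i2 (A : mx4) : xrow i1 i2 (xrow i1 i2 A) = A.
Proof. by apply/matrixP=> k l; rewrite /xrow /row_perm !mxE tpermK. Qed.
Lemma xcolK' i1 i2 (A : mx4) : xcol i1 i2 (xcol i1 i2 A) = A.
Proof. by apply/matrixP=> k l; rewrite /xcol /col_perm !mxE tpermK. Qed.

Lemma elem_sym A B : elem_op A B -> elem_op B A.
Proof.
case=> [i1 i2 X|j1 j2 X|i X|j X].
- by have := op_xrow i1 i2 (xrow i1 i2 X); rewrite xrowK'.
- by have := op_xcol j1 j2 (xcol j1 j2 X); rewrite xcolK'.
- by have := op_negrow i (neg_row i X); rewrite neg_rowK.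
- by have := op_negcol j (neg_col j X); rewrite neg_colK.
Qed.

Lemma eqpm_sym A B : equiv_pm A B -> equiv_pm B A.
Proof.
elim=> [X|X Y Z H _ IH]; first exact: Defs.eq_refl.
exact: eqpm_trans IH (eq_step (elem_sym H) (Defs.eq_refl _)).
Qed.

Definition sgn (b : bool) : int := if b then -1 else 1.
Definition toM (f : nat -> nat -> bool) : mx4 := \matrix_(i, j) sgn (f i j).

Inductive op := OXR of nat & nat | OXC of nat & nat | ONR of nat | ONC of nat.
Definition swp (a b i : nat) : nat := if i == a then b else if i == b then a else i.
Definition appop (o : op) (f : nat -> nat -> bool) : nat -> nat -> bool :=
  match o with
  | OXR a b => fun i j => f (swp a b i) j
  | OXC a b => fun i j => f i (swp a b j)
  | ONR a => fun i j => if i == a then ~~ f i j else f i j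
  | ONC a => fun i j => if j == a then ~~ f i j else f i j
  end.
Definition opok (o : op) : bool :=
  match o with OXR a b | OXC a b => (a < 4)%N && (b < 4)%N | ONR a | ONC a => (a < 4)%N end.
Definition mop (o : op) (A : mx4) : mx4 :=
  match o with
  | OXR a b => xrow (inord a) (inord b) A
  | OXC a b => xcol (inord a) (inord b) A
  | ONR a => neg_row (inord a) A
  | ONC a => neg_col (inord a) A
  end.
Lemma mop_elem o A : elem_op A (mop o A).
Proof. by case: o => *; constructor. Qed.

Lemma eq_inord (i : 'I_4) a : (a < 4)%N -> (i == inord a) = (val i == a).
Proof. by move=> h; rewrite -val_eqE /= inordK. Qed.

Lemma tperm_swp (i : 'I_4) a b : (a < 4)%N -> (b < 4)%N ->
  val (tperm (inord a) (inord b) i) = swp a b i.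
Proof.
move=> ha hb; rewrite /swp -!eq_inord //.
case: tpermP => [->|->|/eqP/negbTE-> /eqP/negbTE->] //.
- by rewrite eqxx /= inordK.
- rewrite eqxx; case: eqP => [E|_]; last by rewrite /= inordK.
  by rewrite -E /= inordK.
Qed.

Lemma sgnN b : sgn (~~ b) = - sgn b.
Proof. by case: b. Qed.

Lemma appop_toM o f : opok o -> toM (appop o f) = mop o (toM f).
Proof.
case: o => [a b|a b|a|a] /= h; apply/matrixP=> i j.
- by case/andP: h => ha hb; rewrite /xrow /row_perm !mxE tperm_swp.
- by case/andP: h => ha hb; rewrite /xcol /col_perm !mxE tperm_swp.
- by rewrite !mxE eq_inord //; case: ifP => _ //; rewrite sgnN.
- by rewrite !mxE eq_inord //; case: ifP => _ //; rewrite sgnN.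
Qed.

Fixpoint appl (os : seq op) f := if os is o :: os' then appl os' (appop o f) else f.

Lemma appl_equiv os f : all opok os -> equiv_pm (toM f) (toM (appl os f)).
Proof.
elim: os f => [|o os IH] f /=; first by move=> _; apply: Defs.eq_refl.
case/andP=> ho hos; apply: eq_step (IH _ hos).
by rewrite appop_toM //; apply: mop_elem.
Qed.

Definition eqf (f g : nat -> nat -> bool) :=
  all (fun i => all (fun j => f i j == g i j) (iota 0 4)) (iota 0 4).
Lemma mem_iota4 (i : 'I_4) : (val i \in iota 0 4).
Proof. by rewrite mem_iota ltn_ord. Qed.
Lemma eqf_toM f g : eqf f g -> toM f = toM g.
Proof.
move/allP=> H; apply/matrixP=> i j; rewrite !mxE.
by have /allP/(_ _ (mem_iota4 j))/eqP-> := H _ (mem_iota4 i).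
Qed.

Definition P24 : seq (seq nat) :=
 [:: [:: 1; 2; 0; 3]; [:: 2; 1; 0; 3]; [:: 0; 2; 1; 3];
           [:: 2; 0; 1; 3]; [:: 1; 0; 2; 3]; [:: 0; 1; 2; 3];
           [:: 1; 3; 0; 2]; [:: 3; 1; 0; 2]; [:: 0; 3; 1; 2];
           [:: 3; 0; 1; 2]; [:: 1; 0; 3; 2]; [:: 0; 1; 3; 2];
           [:: 3; 2; 0; 1]; [:: 2; 3; 0; 1]; [:: 0; 2; 3; 1];
           [:: 2; 0; 3; 1]; [:: 3; 0; 2; 1]; [:: 0; 3; 2; 1];
           [:: 2; 1; 3; 0]; [:: 1; 2; 3; 0]; [:: 3; 1; 2; 0];
           [:: 1; 3; 2; 0]; [:: 2; 3; 1; 0]; [:: 3; 2; 1; 0]].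
Lemma P24E : P24 = permutations (iota 0 4).
Proof. by vm_compute. Qed.

Definition gS (s : 'S_4) : seq nat := [seq val (s i) | i <- enum 'I_4].
Lemma nth_gS s (i : 'I_4) : nth 0 (gS s) i = s i.
Proof. by rewrite /gS (nth_map ord0) ?size_enum_ord ?nth_ord_enum. Qed.
Lemma gS_inj : injective gS.
Proof. by move=> s1 s2 E; apply/permP=> i; apply/val_inj; rewrite /= -!nth_gS E. Qed.
Lemma gS_perm s : perm_eq (gS s) (iota 0 4).
Proof.
apply: uniq_perm; [|exact: iota_uniq|].
- rewrite map_inj_uniq ?enum_uniq // => x y /val_inj; exact: perm_inj.
- move=> x; rewrite mem_iota /=; apply/mapP/idP => [[i _ ->] | hx]; first exact: ltn_ord.
  by exists ((s^-1)%g (Ordinal hx)); [rewrite mem_enum | rewrite permKV].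
Qed.

Lemma permanentE A : permanent A = \sum_(q <- P24) \prod_(i < 4) A i (inord (nth 0 q i)).
Proof.
have hperm : perm_eq [seq gS s | s <- enum 'S_4] P24.
  have hu : uniq [seq gS s | s <- enum 'S_4].
    by rewrite map_inj_uniq ?enum_uniq //; exact: gS_inj.
  have hsub : {subset [seq gS s | s <- enum 'S_4] <= P24}.
    by move=> q /mapP[s _ ->]; rewrite P24E mem_permutations gS_perm.
  have hsz : (size P24 <= size [seq gS s | s <- enum 'S_4])%N.
    by rewrite size_map -cardE card_Sn.
  have [_ hi] := uniq_min_size hu hsub hsz.
  by apply: uniq_perm => //; rewrite P24E permutations_uniq.
rewrite -(perm_big _ hperm) big_map big_enum /permanent.
by apply: eq_bigr => s _; apply: eq_bigr => i _; rewrite nth_gS inord_val.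
Qed.

Definition PFc (f : nat -> nat -> bool) : int :=
  foldr (fun q acc => sgn (f 0%N (nth 0 q 0)) * (sgn (f 1%N (nth 0 q 1)) *
     (sgn (f 2%N (nth 0 q 2)) * (sgn (f 3%N (nth 0 q 3)) * 1))) + acc) 0 P24.

Lemma permanent_toM f : permanent (toM f) = PFc f.
Proof.
rewrite permanentE /PFc.
have : all (fun q => (size q == 4) && all (fun k => (k < 4)%N) q) P24 by [].
elim: P24 => [|q l IH]; first by rewrite big_nil.
case/andP=> /andP[/eqP hs /(all_nthP 0) hq] hl.
rewrite big_cons IH // !big_ord_recl big_ord0 !mxE /= !inordK //; apply: hq; by rewrite hs.
Qed.

Definition lf (r : seq (seq bool)) : nat -> nat -> bool :=
  fun i j => nth false (nth [::] r i) j.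
Definition fS1 := lf [:: [:: true; true; false; false]; [:: false; false; false; false];
  [:: false; false; false; false]; [:: false; false; false; false]].
Definition fS2 := lf [:: [:: true; true; false; false]; [:: false; true; true; false];
  [:: false; false; false; false]; [:: false; false; false; false]].
Definition fS3 := lf [:: [:: true; true; false; false]; [:: false; true; false; false];
  [:: false; false; true; false]; [:: false; false; false; false]].
Definition trf (f : nat -> nat -> bool) := fun i j => f j i.
Definition repf (k : nat) :=
  match k with 0 => fS1 | 1 => trf fS1 | 2 => fS2 | 3 => trf fS2 | _ => fS3 end.

Lemma reps_toM (k : 'I_5) : reps k = toM (repf k).
Proof.
case: k => [[|[|[|[|[|k]]]]] hk] //=; apply/matrixP => i j; rewrite /reps /= !mxE;
  by case: i => [[|[|[|[|i]]]] hi]; case: j => [[|[|[|[|j]]]] hj].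
Qed.

Lemma pm_one_toM f : pm_one (toM f).
Proof. by move=> i j; rewrite mxE /sgn; case: (f i j); [right|left]. Qed.

Lemma toM_tr f : (toM f)^T = toM (trf f).
Proof. by apply/matrixP=> i j; rewrite !mxE. Qed.

Definition rrel (A : mx4) (i j : 'I_4) : bool :=
  [forall k, A i k == A j k] || [forall k, A i k == - A j k].
Definition rc (A : mx4) : nat := (\sum_(i < 4) \sum_(j < 4) rrel A i j)%N.
Definition cc (A : mx4) : nat := rc A^T.

Lemma forall_perm (t : 'S_4) (P : pred 'I_4) : [forall k, P (t k)] = [forall k, P k].
Proof.
apply/forallP/forallP => H k; last exact: H.
by have := H ((t^-1)%g k); rewrite permKV.
Qed.

Lemma rc_xrow a b A : rc (xrow a b A) = rc A.
Proof.
pose t := tperm a b.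
have E i j : rrel (xrow a b A) i j = rrel A (t i) (t j).
  by rewrite /rrel; congr (_ || _); apply: eq_forallb => k; rewrite /xrow /row_perm !mxE.
rewrite /rc; under eq_bigr => i _ do under eq_bigr => j _ do rewrite E.
rewrite [RHS](reindex_inj (@perm_inj _ t)); apply: eq_bigr => i _.
by rewrite [RHS](reindex_inj (@perm_inj _ t)).
Qed.

Lemma rc_negrow r A : rc (neg_row r A) = rc A.
Proof.
suff E i j : rrel (neg_row r A) i j = rrel A i j.
  by rewrite /rc; apply: eq_bigr => i _; apply: eq_bigr => j _; rewrite E.
rewrite /rrel.
have F x k : neg_row r A x k = (if x == r then - A x k else A x k) by rewrite mxE.
case Hi: (i == r); case Hj: (j == r).
- by congr (_ || _); apply: eq_forallb => k; rewrite !F Hi Hj eqr_opp.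
- rewrite orbC; congr (_ || _); apply: eq_forallb => k; rewrite !F Hi Hj.
    by rewrite eqr_opp.
  by rewrite eqr_oppLR.
- rewrite orbC; congr (_ || _); apply: eq_forallb => k; rewrite !F Hi Hj //.
  by rewrite opprK.
- by congr (_ || _); apply: eq_forallb => k; rewrite !F Hi Hj.
Qed.

Lemma rc_xcol a b A : rc (xcol a b A) = rc A.
Proof.
suff E i j : rrel (xcol a b A) i j = rrel A i j.
  by rewrite /rc; apply: eq_bigr => i _; apply: eq_bigr => j _; rewrite E.
rewrite /rrel /xcol /col_perm.
congr (_ || _).
- rewrite -(forall_perm (tperm a b) (fun k => A i k == A j k)).
  by apply: eq_forallb => k; rewrite !mxE.
- rewrite -(forall_perm (tperm a b) (fun k => A i k == - A j k)).
  by apply: eq_forallb => k; rewrite !mxE.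
Qed.

Lemma rc_negcol c A : rc (neg_col c A) = rc A.
Proof.
suff E i j : rrel (neg_col c A) i j = rrel A i j.
  by rewrite /rc; apply: eq_bigr => i _; apply: eq_bigr => j _; rewrite E.
rewrite /rrel; congr (_ || _); apply: eq_forallb => k; rewrite !mxE;
  by case: (k == c); rewrite ?eqr_opp.
Qed.

Lemma tr_negrow i (A : mx4) : (neg_row i A)^T = neg_col i A^T.
Proof. by apply/matrixP=> k l; rewrite !mxE. Qed.
Lemma tr_negcol i (A : mx4) : (neg_col i A)^T = neg_row i A^T.
Proof. by apply/matrixP=> k l; rewrite !mxE. Qed.

Lemma elem_inv A B : elem_op A B -> rc A = rc B /\ cc A = cc B.
Proof.
rewrite /cc; case=> [a b X|a b X|a X|a X].
- by rewrite rc_xrow tr_xrow rc_xcol.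
- by rewrite rc_xcol tr_xcol rc_xrow.
- by rewrite rc_negrow tr_negrow rc_negcol.
- by rewrite rc_negcol tr_negcol rc_negrow.
Qed.

Lemma equiv_inv A B : equiv_pm A B -> rc A = rc B /\ cc A = cc B.
Proof.
elim=> // X Y Z /elem_inv [h1 h2] _ [h3 h4]; split; congruence.
Qed.

Definition rrelf (f : nat -> nat -> bool) (i j : nat) : bool :=
  all (fun k => f i k == f j k) (iota 0 4) || all (fun k => f i k != f j k) (iota 0 4).
Definition sum4 (G : nat -> nat) : nat := (G 0 + (G 1 + (G 2 + (G 3 + 0))))%N.
Definition rcf f := sum4 (fun i => sum4 (fun j => rrelf f i j)).

Lemma forall_iota (P : pred nat) : [forall k : 'I_4, P k] = all P (iota 0 4).
Proof.
apply/forallP/allP => H k; last exact: H (mem_iota4 k).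
by rewrite mem_iota => /andP[_ hk]; exact: (H (Ordinal hk)).
Qed.

Lemma sum4E (G : nat -> nat) : (\sum_(i < 4) G i)%N = sum4 G.
Proof. by rewrite !big_ord_recl big_ord0. Qed.

Lemma rc_toM f : rc (toM f) = rcf f.
Proof.
have E i j : rrel (toM f) i j = rrelf f i j.
  rewrite /rrel /rrelf; congr (_ || _); rewrite -forall_iota; apply: eq_forallb => k;
  by rewrite !mxE; case: (f i k); case: (f j k).
rewrite /rc; under eq_bigr => i _ do under eq_bigr => j _ do rewrite E.
under eq_bigr => i _ do rewrite (sum4E (fun j => rrelf f i j)).
by rewrite (sum4E (fun i => sum4 (fun j => rrelf f i j))).
Qed.

Lemma permanent_negrow r A : permanent (neg_row r A) = - permanent A.
Proof.
rewrite /permanent -sumrN; apply: eq_bigr => s _.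
rewrite (bigD1 r) //= [in RHS](bigD1 r) //= mxE eqxx mulNr; congr (- (_ * _)).
by apply: eq_bigr => i /negbTE hi; rewrite mxE hi.
Qed.

Lemma permanent_negcol c A : permanent (neg_col c A) = - permanent A.
Proof.
rewrite /permanent -sumrN; apply: eq_bigr => s _.
rewrite (bigD1 ((s^-1)%g c)) //= [in RHS](bigD1 ((s^-1)%g c)) //= mxE permKV eqxx mulNr.
congr (- (_ * _)); apply: eq_bigr => i hi; rewrite mxE.
case: eqP => // E; move: hi; by rewrite -E permK eqxx.
Qed.

Definition fof (s : seq bool) : nat -> nat -> bool := fun i j => nth false s (i * 4 + j)%N.
Fixpoint allb n (P : seq bool -> bool) : bool :=
  if n is n'.+1 then allb n' (fun s => P (true :: s)) && allb n' (fun s => P (false :: s))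
  else P [::].
Lemma allbP n P s : allb n P -> size s = n -> P s.
Proof.
elim: n P s => [|n IH] P [|b s] //= /andP[h1 h2] [hs].
by case: b; [apply: (IH (fun s => P (true :: s))) | apply: (IH (fun s => P (false :: s)))].
Qed.

Lemma appl_cat r os f : appl (r ++ os) f = appl os (appl r f).
Proof. by elim: r f => //= o r IH f; rewrite IH. Qed.

Lemma applNR l f : appl (map ONR l) f = fun i j => f i j (+) odd (count_mem i l).
Proof.
elim: l f => [|a l IH] f /=.
  by apply: functional_extensionality => i; apply: functional_extensionality => j; rewrite addbF.
rewrite IH; apply: functional_extensionality => i; apply: functional_extensionality => j.
rewrite oddD; case: (eqVneq i a) => [->|ne]; rewrite ?eqxx;
  by case: (f _ _); case: (odd _).
Qed.

Lemma applNC l f : appl (map ONC l) f = fun i j => f i j (+) odd (count_mem j l).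
Proof.
elim: l f => [|a l IH] f /=.
  by apply: functional_extensionality => i; apply: functional_extensionality => j; rewrite addbF.
rewrite IH; apply: functional_extensionality => i; apply: functional_extensionality => j.
rewrite oddD; case: (eqVneq j a) => [->|ne]; rewrite ?eqxx;
  by case: (f _ _); case: (odd _).
Qed.

Definition rowsel (f : nat -> nat -> bool) := [seq i <- iota 0 4 | f i 0%N].
Definition colsel (f : nat -> nat -> bool) := [seq j <- iota 0 4 | f 0%N j (+) f 0%N 0%N].
Definition norm_ops f := map ONR (rowsel f) ++ map ONC (colsel f).

Lemma count_sel (P : pred nat) (i : 'I_4) : odd (count_mem (val i) [seq k <- iota 0 4 | P k]) = P i.
Proof.
rewrite count_uniq_mem ?filter_uniq ?iota_uniq // mem_filter mem_iota4 andbT.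
by case: (P i).
Qed.

Lemma norm_ops_ok f : all opok (norm_ops f).
Proof.
rewrite /norm_ops all_cat !all_map; apply/andP; split; apply/allP => x;
  by rewrite mem_filter mem_iota => /andP[_ /andP[_ h]].
Qed.

Definition isneg (o : op) := match o with ONR _ | ONC _ => true | _ => false end.

Lemma norm_ops_neg (os : seq op) : forall A g, permanent A = 0 -> all isneg os ->
  A = toM g -> all opok os -> permanent (toM (appl os g)) = 0.
Proof.
elim: os => [|o os IH] A g hA //=; first by move=> _ <-.
case/andP=> hn hns EA /andP[ho hos]; apply: (IH (mop o A)) => //; last by rewrite EA appop_toM.
by case: o {ho} hn => //= a _; rewrite ?permanent_negrow ?permanent_negcol hA oppr0.
Qed.

Definition bf (s : seq bool) : nat -> nat -> bool :=
  fun i j => if (i == 0%N) || (j == 0%N) then false else nth false s ((i.-1) * 3 + j.-1)%N.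

Definition key (g : nat -> nat -> bool) : nat :=
  (nat_of_bool (g 1 1) + 2 * g 1 2 + 4 * g 1 3 + 8 * g 2 1 + 16 * g 2 2 + 32 * g 2 3
   + 64 * g 3 1 + 128 * g 3 2 + 256 * g 3 3)%N.

Definition table : seq (option (seq op * nat)) := [::
  None;
  None;
  None;
  Some ([:: (OXC 0 2); (OXR 0 1)], 0);
  None;
  Some ([:: (OXC 0 3); (OXR 0 1)], 0);
  Some ([:: (ONR 1); (OXR 0 1)], 0);
  None;
  None;
  Some ([:: (OXR 0 2); (OXC 0 1)], 1);
  None;
  None;
  None;
  None;
  None;
  None;
  None;
  None;
  Some ([:: (OXC 0 2); (OXR 0 2)], 1);
  None;
  None;
  None;
  None;
  None;
  Some ([:: (OXC 0 2); (OXR 0 2)], 0);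
  None;
  None;
  None;
  None;
  Some ([:: (OXC 0 3); (OXR 0 2); (OXR 0 1)], 2);
  Some ([:: (ONR 1); (OXR 0 2); (OXR 0 1)], 2);
  None;
  None;
  None;
  None;
  None;
  Some ([:: (OXC 0 3); (OXR 0 2)], 1);
  None;
  None;
  None;
  Some ([:: (OXC 0 3); (OXR 0 2)], 0);
  None;
  None;
  Some ([:: (OXC 0 3); (OXR 0 2)], 2);
  None;
  None;
  Some ([:: (OXC 0 3); (OXR 0 2); (OXC 0 1)], 2);
  None;
  Some ([:: (ONR 2); (OXR 0 2)], 0);
  None;
  None;
  Some ([:: (ONR 2); (OXR 0 2)], 2);
  None;
  Some ([:: (ONR 2); (OXC 2 3); (OXR 0 2)], 2);
  None;
  None;
  None;
  None;
  None;
  None;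
  None;
  None;
  None;
  Some ([:: (ONR 2); (ONR 1); (OXR 0 2)], 1);
  None;
  Some ([:: (OXR 0 3); (OXC 0 1)], 1);
  None;
  None;
  None;
  None;
  None;
  None;
  Some ([:: (ONC 1); (OXC 0 1)], 1);
  None;
  None;
  None;
  None;
  None;
  None;
  None;
  None;
  None;
  None;
  Some ([:: (OXR 0 3); (OXC 0 2); (OXC 0 1)], 3);
  None;
  Some ([:: (OXC 0 3); (OXR 0 3); (OXR 0 1)], 4);
  Some ([:: (ONR 1); (OXR 0 3); (OXR 0 1)], 4);
  None;
  None;
  None;
  Some ([:: (ONC 1); (OXC 0 2); (OXC 0 1)], 3);
  None;
  Some ([:: (ONC 1); (OXC 0 3); (OXR 0 1)], 4);
  None;
  None;
  Some ([:: (ONC 1); (ONR 1); (OXR 0 1)], 4);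
  None;
  None;
  None;
  Some ([:: (OXC 0 3); (OXR 0 3); (OXC 0 2); (OXR 0 1)], 4);
  None;
  Some ([:: (OXC 0 3); (OXR 0 3); (OXC 0 1)], 3);
  Some ([:: (ONR 1); (OXC 2 3); (OXR 0 3); (OXR 0 1)], 4);
  None;
  None;
  None;
  Some ([:: (ONC 1); (OXC 0 3); (OXC 0 2); (OXR 0 1)], 4);
  None;
  Some ([:: (ONC 1); (OXC 0 3); (OXC 0 1)], 3);
  None;
  None;
  Some ([:: (ONC 1); (ONR 1); (OXC 2 3); (OXR 0 1)], 4);
  None;
  None;
  Some ([:: (ONR 2); (ONC 1); (OXC 0 2); (OXR 0 1)], 4);
  None;
  Some ([:: (ONC 3); (OXR 1 3); (OXC 0 3); (OXC 0 1); (OXR 0 1)], 4);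
  None;
  None;
  Some ([:: (ONR 2); (ONC 1); (ONR 1); (OXC 0 1)], 3);
  None;
  None;
  None;
  Some ([:: (ONR 2); (OXR 0 3); (OXC 0 2); (OXR 0 1)], 4);
  None;
  Some ([:: (ONR 2); (OXC 2 3); (OXR 0 3); (OXC 0 2); (OXR 0 1)], 4);
  Some ([:: (ONR 2); (ONR 1); (OXR 0 3); (OXC 0 1)], 3);
  None;
  None;
  None;
  Some ([:: (OXR 0 3); (OXC 0 2)], 1);
  None;
  None;
  None;
  None;
  None;
  None;
  None;
  None;
  Some ([:: (OXR 0 3); (OXC 0 2)], 3);
  None;
  Some ([:: (OXC 0 3); (OXR 0 3); (OXR 0 2); (OXR 0 1)], 4);
  Some ([:: (ONR 1); (OXR 0 3); (OXR 0 2); (OXR 0 1)], 4);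
  None;
  Some ([:: (ONC 2); (OXC 0 2)], 1);
  None;
  None;
  None;
  None;
  None;
  None;
  None;
  None;
  Some ([:: (ONC 2); (OXC 0 2)], 3);
  None;
  None;
  Some ([:: (ONC 2); (ONR 1); (OXR 0 2); (OXR 0 1)], 4);
  None;
  None;
  Some ([:: (ONC 2); (OXC 0 3); (OXR 0 2); (OXR 0 1)], 4);
  None;
  None;
  None;
  Some ([:: (ONC 2); (ONR 2); (OXR 0 2)], 4);
  None;
  Some ([:: (OXC 0 3); (OXR 0 3); (OXR 0 2); (OXC 0 1); (OXR 0 1)], 4);
  Some ([:: (OXC 1 3); (OXR 0 3); (OXC 0 2)], 3);
  None;
  None;
  Some ([:: (OXC 0 3); (OXR 0 3); (OXR 0 2)], 4);
  None;
  None;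
  Some ([:: (OXC 0 3); (OXR 0 3); (OXR 0 2); (OXC 0 1)], 4);
  None;
  None;
  Some ([:: (ONC 2); (ONR 2); (ONR 1); (OXC 1 2); (OXC 0 1)], 3);
  None;
  Some ([:: (ONR 2); (OXR 0 3); (OXR 0 2)], 4);
  None;
  None;
  Some ([:: (ONC 2); (OXC 1 3); (OXC 0 2)], 3);
  None;
  None;
  Some ([:: (ONC 2); (OXC 0 3); (OXR 0 2); (OXC 0 1); (OXR 0 1)], 4);
  None;
  None;
  None;
  Some ([:: (ONC 2); (OXC 0 3); (OXR 0 2)], 4);
  None;
  Some ([:: (ONR 2); (ONR 1); (OXC 1 2); (OXR 0 3); (OXC 0 1)], 3);
  Some ([:: (ONC 2); (OXC 0 3); (OXR 0 2); (OXC 0 1)], 4);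
  None;
  Some ([:: (OXR 0 3); (OXC 0 2)], 0);
  None;
  None;
  None;
  None;
  Some ([:: (OXC 0 3); (OXR 0 3); (OXR 0 1)], 2);
  Some ([:: (ONR 1); (OXR 0 3); (OXR 0 1)], 2);
  None;
  None;
  None;
  Some ([:: (OXR 0 3); (OXC 0 2); (OXR 0 1)], 3);
  None;
  Some ([:: (ONC 1); (OXR 2 3); (OXC 0 3); (OXR 0 1)], 4);
  None;
  None;
  Some ([:: (ONC 1); (ONR 1); (OXR 2 3); (OXR 0 1)], 4);
  None;
  Some ([:: (ONC 2); (OXR 2 3); (OXC 0 2)], 3);
  None;
  None;
  Some ([:: (ONR 3); (OXC 1 3); (OXR 0 3)], 4);
  None;
  None;
  Some ([:: (ONC 2); (OXR 2 3); (OXC 0 3); (OXR 0 2); (OXR 0 1)], 4);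
  None;
  None;
  None;
  Some ([:: (ONC 2); (ONC 1); (OXC 0 2)], 0);
  None;
  Some ([:: (ONC 2); (ONC 1); (ONR 1); (OXR 0 1)], 2);
  Some ([:: (ONC 2); (ONC 1); (OXC 0 3); (OXR 0 1)], 2);
  None;
  None;
  Some ([:: (OXC 0 3); (OXR 0 3); (OXC 0 2)], 4);
  Some ([:: (OXC 0 3); (OXR 0 3); (OXC 0 2); (OXC 0 1)], 4);
  None;
  None;
  None;
  None;
  Some ([:: (ONR 3); (ONR 1); (OXC 1 3); (OXR 0 3); (OXR 0 1)], 3);
  Some ([:: (OXR 1 3); (OXC 0 3); (OXR 0 2)], 2);
  None;
  None;
  Some ([:: (ONC 2); (ONR 2); (ONC 1); (OXR 1 2); (OXR 0 1)], 2);
  None;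
  Some ([:: (ONC 3); (ONC 1); (OXR 1 3); (OXC 0 3); (OXC 0 1)], 2);
  None;
  None;
  Some ([:: (ONR 2); (OXR 1 3); (OXR 0 2)], 2);
  None;
  None;
  Some ([:: (ONC 2); (ONC 1); (OXR 1 2); (OXC 0 3); (OXR 0 1)], 2);
  None;
  None;
  Some ([:: (ONC 3); (ONC 2); (ONR 0); (OXC 2 3); (OXR 1 3)], 2);
  None;
  None;
  Some ([:: (ONR 2); (OXR 0 3); (OXC 0 2)], 4);
  Some ([:: (ONR 2); (OXR 0 3); (OXC 0 2); (OXC 0 1)], 4);
  None;
  Some ([:: (ONR 3); (ONR 2); (ONC 0); (OXR 2 3); (OXC 1 3)], 3);
  None;
  None;
  None;
  None;
  None;
  None;
  None;
  Some ([:: (OXC 0 3); (OXR 0 3)], 1);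
  None;
  None;
  None;
  None;
  None;
  None;
  Some ([:: (OXC 0 3); (OXR 0 3); (OXC 0 2); (OXR 0 2); (OXR 0 1)], 4);
  None;
  Some ([:: (OXC 0 3); (OXR 0 3)], 3);
  Some ([:: (OXC 1 2); (OXC 0 3); (OXR 0 3); (OXC 0 1); (OXR 0 1)], 4);
  None;
  None;
  None;
  None;
  Some ([:: (ONR 1); (OXC 1 3); (OXR 0 3); (OXR 0 1)], 4);
  None;
  Some ([:: (OXC 0 3); (OXR 0 3); (OXC 0 1); (OXR 0 1)], 4);
  Some ([:: (OXC 1 2); (OXC 0 3); (OXR 0 3)], 3);
  None;
  None;
  Some ([:: (ONC 1); (OXR 1 3); (OXC 0 3); (OXR 0 1)], 4);
  Some ([:: (ONR 3); (ONC 2); (OXR 1 3); (OXR 0 2); (OXR 0 1)], 4);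
  None;
  None;
  None;
  None;
  Some ([:: (ONC 3); (ONR 2); (ONR 1); (OXC 1 3); (OXC 0 1)], 3);
  Some ([:: (ONC 3); (OXC 0 3)], 1);
  None;
  None;
  None;
  None;
  None;
  None;
  None;
  None;
  Some ([:: (ONC 3); (OXC 0 3)], 3);
  Some ([:: (OXR 1 2); (OXC 0 3); (OXR 0 3); (OXC 0 1); (OXR 0 1)], 4);
  None;
  None;
  None;
  None;
  Some ([:: (ONC 3); (OXC 0 3); (OXC 0 2); (OXR 0 2); (OXR 0 1)], 4);
  None;
  Some ([:: (ONC 3); (OXC 0 3); (OXC 0 1); (OXR 0 1)], 4);
  Some ([:: (ONC 3); (OXC 1 2); (OXC 0 3)], 3);
  None;
  None;
  None;
  None;
  Some ([:: (ONC 3); (ONR 1); (OXC 1 3); (OXR 0 1)], 4);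
  None;
  None;
  None;
  Some ([:: (ONR 2); (ONR 1); (OXC 1 3); (OXR 0 3); (OXC 0 1)], 3);
  None;
  Some ([:: (ONC 3); (OXC 0 3); (OXC 0 2); (OXR 0 2)], 4);
  Some ([:: (ONR 2); (OXC 1 3); (OXR 0 3); (OXC 0 2); (OXR 0 1)], 4);
  None;
  Some ([:: (OXC 0 3); (OXR 0 3)], 0);
  None;
  None;
  Some ([:: (OXC 0 3); (OXR 0 3)], 2);
  None;
  None;
  Some ([:: (OXC 0 3); (OXR 0 3); (OXC 0 1)], 2);
  None;
  None;
  None;
  Some ([:: (OXR 1 2); (OXC 0 3); (OXR 0 3)], 4);
  None;
  Some ([:: (OXC 0 3); (OXR 0 3); (OXR 0 1)], 3);
  None;
  None;
  Some ([:: (ONC 1); (ONR 1); (OXC 2 3); (OXR 2 3); (OXR 0 1)], 4);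
  None;
  Some ([:: (OXC 0 3); (OXR 0 3)], 4);
  None;
  None;
  Some ([:: (OXC 0 3); (OXR 0 3); (OXC 0 1)], 4);
  None;
  None;
  Some ([:: (ONR 3); (ONR 1); (OXC 1 2); (OXR 0 3); (OXR 0 1)], 3);
  Some ([:: (OXR 1 2); (OXC 0 3); (OXR 0 3)], 2);
  None;
  None;
  Some ([:: (ONR 3); (ONC 2); (ONC 1); (OXR 1 3); (OXR 0 1)], 2);
  None;
  Some ([:: (ONC 3); (ONC 1); (OXR 1 2); (OXC 0 3); (OXC 0 1)], 2);
  None;
  None;
  None;
  Some ([:: (ONC 3); (OXR 2 3); (OXC 0 3)], 3);
  Some ([:: (OXR 1 2); (OXC 0 3); (OXR 0 3); (OXC 0 1)], 4);
  None;
  None;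
  None;
  None;
  Some ([:: (ONC 3); (ONC 1); (OXR 1 2); (OXC 0 3)], 4);
  None;
  None;
  None;
  Some ([:: (ONC 3); (ONC 1); (OXC 0 3); (OXC 0 1)], 2);
  None;
  Some ([:: (ONC 3); (ONC 1); (OXC 0 3)], 0);
  Some ([:: (ONC 3); (ONC 1); (OXC 0 3)], 2);
  None;
  Some ([:: (OXR 1 2); (OXC 0 3); (OXR 0 3); (OXC 0 1)], 2);
  None;
  None;
  None;
  None;
  Some ([:: (ONC 3); (ONC 1); (OXR 1 2); (OXC 0 3)], 2);
  Some ([:: (ONC 3); (ONC 2); (ONR 0); (OXR 1 3)], 2);
  None;
  None;
  Some ([:: (ONC 3); (ONC 1); (OXC 0 3); (OXC 0 1)], 4);
  Some ([:: (ONR 3); (ONR 2); (ONC 0); (OXR 2 3); (OXC 1 2)], 3);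
  None;
  Some ([:: (ONC 3); (ONC 1); (OXC 0 3)], 4);
  None;
  None;
  None;
  Some ([:: (ONR 3); (OXR 0 3)], 0);
  None;
  None;
  Some ([:: (ONR 3); (OXR 0 3)], 2);
  None;
  Some ([:: (ONR 3); (OXC 2 3); (OXR 0 3)], 2);
  None;
  None;
  None;
  None;
  Some ([:: (OXC 1 2); (OXC 0 3); (OXR 0 3)], 4);
  None;
  Some ([:: (OXC 1 2); (OXC 0 3); (OXR 0 3); (OXC 0 1)], 4);
  None;
  None;
  Some ([:: (ONR 3); (ONR 1); (OXR 0 3); (OXR 0 1)], 3);
  None;
  Some ([:: (ONR 3); (OXR 0 3)], 4);
  None;
  None;
  Some ([:: (OXC 1 2); (OXC 0 3); (OXR 0 3); (OXR 0 1)], 3);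
  None;
  None;
  Some ([:: (ONR 3); (ONR 1); (OXR 0 3); (OXC 0 1)], 4);
  Some ([:: (ONR 3); (OXR 1 2); (OXR 0 3)], 2);
  None;
  None;
  Some ([:: (ONC 2); (ONC 1); (OXR 1 3); (OXC 0 3); (OXR 0 1)], 2);
  None;
  None;
  Some ([:: (ONC 3); (ONC 2); (ONR 0); (OXC 2 3); (OXR 1 2)], 2);
  None;
  None;
  Some ([:: (ONR 3); (OXC 2 3); (OXR 0 3)], 4);
  Some ([:: (OXC 1 3); (OXR 0 3); (OXC 0 2); (OXR 0 1)], 3);
  None;
  None;
  None;
  None;
  Some ([:: (ONC 3); (ONC 2); (ONR 0)], 4);
  Some ([:: (OXR 1 3); (OXC 0 3); (OXR 0 2); (OXC 0 1)], 2);
  None;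
  None;
  None;
  None;
  Some ([:: (ONC 3); (ONC 1); (OXR 1 3); (OXC 0 3)], 2);
  Some ([:: (ONC 3); (ONC 2); (ONR 0); (OXR 1 2)], 2);
  None;
  None;
  None;
  None;
  Some ([:: (ONC 3); (ONC 2); (ONR 0); (OXC 2 3)], 2);
  None;
  Some ([:: (ONC 3); (ONC 2); (ONR 0)], 2);
  Some ([:: (ONC 3); (ONC 2); (ONR 0)], 0);
  None;
  None;
  Some ([:: (ONR 3); (ONR 2); (ONC 0); (OXR 2 3)], 3);
  Some ([:: (ONC 2); (OXR 1 3); (OXC 0 3); (OXR 0 2); (OXC 0 1)], 4);
  None;
  Some ([:: (ONR 2); (OXC 1 3); (OXR 0 3); (OXC 0 2)], 4);
  None;
  None;
  None;
  None;
  None;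
  None;
  None;
  None;
  None;
  None;
  Some ([:: (ONR 3); (ONR 1); (OXR 0 3)], 1);
  None;
  None;
  None;
  Some ([:: (ONR 3); (OXR 0 3); (OXC 0 2); (OXR 0 2); (OXR 0 1)], 4);
  None;
  Some ([:: (ONR 3); (ONR 1); (OXC 1 2); (OXR 0 3); (OXC 0 1); (OXR 0 1)], 4);
  Some ([:: (ONR 3); (ONR 1); (OXR 0 3)], 3);
  None;
  None;
  None;
  None;
  Some ([:: (ONC 2); (OXR 2 3); (OXC 0 3); (OXR 0 2)], 4);
  None;
  Some ([:: (ONR 3); (ONR 1); (OXC 1 2); (OXR 0 3)], 3);
  Some ([:: (ONR 3); (ONR 1); (OXR 0 3); (OXC 0 1); (OXR 0 1)], 4);
  None;
  None;
  Some ([:: (ONR 3); (ONC 1); (OXR 1 3); (OXR 0 1)], 4);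
  Some ([:: (ONC 2); (OXR 1 3); (OXC 0 3); (OXR 0 2); (OXR 0 1)], 4);
  None;
  Some ([:: (ONR 3); (ONR 2); (ONC 0); (OXC 1 3)], 3);
  None;
  None;
  None;
  None;
  None;
  None;
  Some ([:: (ONR 3); (ONR 1); (OXC 1 3); (OXR 0 3)], 3);
  None;
  Some ([:: (ONC 3); (OXR 2 3); (OXC 0 3); (OXC 0 2); (OXR 0 2)], 4);
  Some ([:: (ONC 3); (ONC 2); (ONR 0); (OXR 1 3)], 4);
  None;
  None;
  Some ([:: (ONR 3); (ONR 2); (ONC 0); (OXC 0 1); (OXR 0 1)], 4);
  Some ([:: (ONR 3); (ONR 2); (ONC 0); (OXC 1 2)], 3);
  None;
  Some ([:: (ONC 3); (ONC 1); (OXR 2 3); (OXC 0 3)], 4);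
  None;
  None;
  None;
  None;
  Some ([:: (ONR 3); (ONR 2); (ONC 0)], 3);
  Some ([:: (ONC 2); (OXR 1 3); (OXC 0 3); (OXR 0 2); (OXC 0 1); (OXR 0 1)], 4);
  None;
  Some ([:: (ONC 3); (ONR 3); (OXC 1 3); (OXR 1 3); (OXR 0 1)], 4);
  None;
  None;
  None;
  Some ([:: (ONR 3); (ONR 2); (ONC 0)], 1);
  None;
  None;
  None;
  None;
  None;
  None;
  None].

Definition verify (f : nat -> nat -> bool) : bool :=
  match nth None table (key f) with
  | Some (os, k) => [&& all opok os, (k < 5)%N & eqf (appl os f) (repf k)]
  | None => false
  end.

Definition check : bool := allb 9 (fun s => (PFc (bf s) != 0) || verify (bf s)).

Lemma check_ok : check = true.
Proof. by vm_compute. Qed.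

Lemma toM_ext (f g : nat -> nat -> bool) : (forall i j : 'I_4, f i j = g i j) -> toM f = toM g.
Proof. by move=> H; apply/matrixP=> i j; rewrite !mxE H. Qed.

Lemma exists_rep A : pm_one A -> permanent A = 0 -> exists k : 'I_5, equiv_pm A (reps k).
Proof.
move=> hA hP.
pose s := [seq A (inord (k %/ 4)) (inord (k %% 4)) == -1 | k <- iota 0 16].
have EA : A = toM (fof s).
  apply/matrixP=> i j; rewrite mxE /fof.
  have hij : (i * 4 + j < 16)%N by have := ltn_ord i; have := ltn_ord j; lia.
  rewrite (nth_map 0%N); last by rewrite size_iota.
  rewrite nth_iota // add0n divnMDl // divn_small // addn0 modnMDl modn_small //.
  by rewrite !inord_val; case: (hA i j) => ->.
set f := fof s.
set g := appl (norm_ops f) f.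
have e1 : equiv_pm A (toM g) by rewrite EA; apply: appl_equiv; apply: norm_ops_ok.
have p1 : permanent (toM g) = 0.
  apply: (norm_ops_neg hP) EA (norm_ops_ok f).
  by rewrite /norm_ops all_cat !all_map; apply/andP; split; apply/allP.
pose s9 := [:: g 1 1; g 1 2; g 1 3; g 2 1; g 2 2; g 2 3; g 3 1; g 3 2; g 3 3]%N.
have Eg : toM g = toM (bf s9).
  apply: toM_ext => i j.
  have Eij : g i j = f i j (+) f i 0%N (+) (f 0%N j (+) f 0%N 0%N).
    rewrite /g /norm_ops appl_cat applNR applNC /=.
    by rewrite (count_sel (fun k => f k 0%N)) (count_sel (fun k => f 0%N k (+) f 0%N 0%N)).
  rewrite Eij /bf /s9.
  case: i j Eij => [[|[|[|[|i]]]] hi] [[|[|[|[|j]]]] hj] //= _;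
   by rewrite !addbb.
have := allbP check_ok (s:=s9) erefl; rewrite /= -permanent_toM -Eg p1 eqxx /= /verify.
case: (nth None table _) => [[os k]|] //; case/and3P => hok hk heq.
exists (Ordinal hk); rewrite reps_toM /= -(eqf_toM heq).
apply: eqpm_trans e1 _; rewrite Eg; exact: appl_equiv.
Qed.
Theorem theorem3p6 :
  (forall k : 'I_5, pm_one (reps k) /\ permanent (reps k) = 0) /\
  (forall k l : 'I_5, equiv_pm (reps k) (reps l) -> k = l) /\
  (forall A : mx4, pm_one A -> permanent A = 0 ->
     exists! k : 'I_5, equiv_pm A (reps k)).
Proof.
have part2 : forall k l : 'I_5, equiv_pm (reps k) (reps l) -> k = l.
  move=> k l /equiv_inv; rewrite /cc !reps_toM !toM_tr !rc_toM => -[h1 h2].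
  have H : all (fun k => all (fun l => ((rcf (repf k) == rcf (repf l)) &&
     (rcf (trf (repf k)) == rcf (trf (repf l)))) ==> (k == l)) (iota 0 5)) (iota 0 5).
    by vm_compute.
  have hk : val k \in iota 0 5 by rewrite mem_iota ltn_ord.
  have hl : val l \in iota 0 5 by rewrite mem_iota ltn_ord.
  apply/val_inj/eqP.
  by have /allP/(_ _ hl) := allP H _ hk; rewrite h1 h2 !eqxx.
split; [|split] => //.
- move=> k; rewrite reps_toM; split; first exact: pm_one_toM.
  rewrite permanent_toM; case: k => k _ /=.
  by case: k => [|[|[|[|k]]]]; vm_compute.
- move=> A hA hP; have [k hk] := exists_rep hA hP; exists k; split => // l hl.
  by apply: part2; exact: eqpm_trans (eqpm_sym hk) hl.
Qed.
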